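(* Let $J=p\ge1$, $\sigma_\varepsilon^2>0$, $\sigma_\gamma^2>0$, $0\le\rho\le1$, and let $\mathbf{\Sigma}_\gamma=\sigma_\gamma^2\big((1-\rho)\mathbf{I}_J+\rho\mathbf{1}_J\mathbf{1}_J^{\mathrm T}\big)$ (compound symmetry). Let $\mathbf{A}_{\bm\beta}$ be a nonsingular $J\times J$ matrix and $I$ a positive integer. For an exact design $\xi=(I_1,\dots,I_J)$ (nonnegative integers with $\sum_jI_j=I$) let $$\mathbf{M}_{\bm\beta}(\xi)=\mathbf{A}_{\bm\beta}^{\mathrm T}\mathbf{M}_0(\xi)^{1/2}\big(\sigma_\varepsilon^2\mathbf{I}_J+\mathbf{M}_0(\xi)^{1/2}\mathbf{\Sigma}_\gamma\mathbf{M}_0(\xi)^{1/2}\big)^{-1}\mathbf{M}_0(\xi)^{1/2}\mathbf{A}_{\bm\beta},\quad \mathbf{M}_0(\xi)^{1/2}=\mathrm{diag}(\sqrt{I_1},\dots,\sqrt{I_J}).$$ Then an exact design is $D$-optimal among exact designs if $I_j^*=[I/J]+1$ for $J'=I \bmod J$ of the time points and $I_j^*=[I/J]$ for the remaining $J-J'$ time points. In particular, if $I$ is a multiple of $J$, the uniform design with $I_j^*=I/J$ for all $j=1,\dots,J$ is $D$-optimal.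
   Context: $[a]$ denotes the integer part of $a$ and $m\bmod n=m-n[m/n]$. $\mathbf{A}_{\bm\beta}$ is the Jacobian of the mean response curve at a fixed parameter $\bm\beta$ with as many parameters as time points. $\bm\beta$ is estimable under $\xi$ if $\mathbf{A}_{\bm\beta}$ has full column rank and its columns lie in the column space of $\mathrm{diag}(I_1,\dots,I_J)$ (here: all $I_j>0$). A design $\xi^*$ is $D$-optimal if $\log\det\mathbf{M}_{\bm\beta}(\xi^* )\ge\log\det\mathbf{M}_{\bm\beta}(\xi)$ for all designs $\xi$ (of the considered class, with total $I$) under which $\bm\beta$ is estimable. *)

(* Defs.v *)
From HB Require Import structures.
From mathcomp Require Import all_boot all_order all_algebra.
From mathcomp Require Import all_classical all_reals all_analysis.
Set Implicit Arguments. Unset Strict Implicit. Unset Printing Implicit Defensive.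
Import Order.TTheory GRing.Theory Num.Theory.
Local Open Scope ring_scope.

Definition Sigma_gamma (R : realType) (J : nat) (sg2 rho : R) : 'M[R]_J :=
  sg2 *: ((1 - rho) *: 1%:M + rho *: const_mx 1).

Definition M0half (R : realType) (J : nat) (xi : 'I_J -> nat) : 'M[R]_J :=
  diag_mx (\row_j Num.sqrt ((xi j)%:R : R)).

Definition Mbeta (R : realType) (J : nat) (se2 sg2 rho : R) (A : 'M[R]_J)
    (xi : 'I_J -> nat) : 'M[R]_J :=
  let D := M0half R xi in
  A^T *m D *m invmx (se2 *: 1%:M + D *m Sigma_gamma J sg2 rho *m D) *m D *m A.

Definition exact_design (J I : nat) (xi : 'I_J -> nat) : Prop :=
  (\sum_(j < J) xi j)%N = I.

Definition estimable (R : realType) (J : nat) (A : 'M[R]_J) (xi : 'I_J -> nat) : Prop :=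
  \rank A = J /\ (forall j, (0 < xi j)%N).

Definition D_optimal (R : realType) (J I : nat) (se2 sg2 rho : R) (A : 'M[R]_J)
    (xistar : 'I_J -> nat) : Prop :=
  exact_design I xistar /\
  forall xi : 'I_J -> nat, exact_design I xi -> estimable A xi ->
    ln (\det (Mbeta se2 sg2 rho A xi)) <= ln (\det (Mbeta se2 sg2 rho A xistar)).

(* Main.v *)
Require Import Defs.
From HB Require Import structures.
From mathcomp Require Import all_boot all_order all_algebra.
From mathcomp Require Import all_classical all_reals all_analysis.
From mathcomp Require Import ring lra zify.
Import Order.TTheory GRing.Theory Num.Theory.
Local Open Scope ring_scope.
Set Implicit Arguments. Unset Strict Implicit.
Lemma det1D_mul (R : comNzRingType) m n (P : 'M[R]_(m,n)) (Q : 'M[R]_(n,m)) :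
  \det (1%:M + P *m Q) = \det (1%:M + Q *m P).
Proof.
have e1 : block_mx (1%:M + P *m Q) (-P) 0 1%:M *m block_mx 1%:M 0 Q 1%:M
        = block_mx 1%:M (-P) Q 1%:M.
  rewrite mulmx_block !(mulmx1, mul1mx, mulmx0, mul0mx, addr0, add0r) mulNmx.
  by rewrite addrK.
have e2 : block_mx 1%:M 0 Q 1%:M *m block_mx 1%:M (-P) 0 (1%:M + Q *m P)
        = block_mx 1%:M (-P) Q 1%:M.
  rewrite mulmx_block !(mulmx1, mul1mx, mulmx0, mul0mx, addr0, add0r) mulmxN.
  by rewrite addrCA addNr addr0.
have := congr1 determinant (etrans e1 (esym e2)).
by rewrite !det_mulmx !det_ublock (@det_lblock _ m n) !det1 !mulr1 !mul1r.
Qed.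

Lemma det_diag_rank1 (R : fieldType) n (v : 'I_n -> R) (k : R) : (forall i, v i != 0) ->
  \det (diag_mx (\row_i v i) + k *: const_mx 1) = (\prod_i v i) * (1 + k * \sum_i (v i)^-1).
Proof.
move=> hv.
pose P : 'M[R]_(n,1) := \col_i (k / v i).
pose Q : 'M[R]_(1,n) := const_mx 1.
have -> : diag_mx (\row_i v i) + k *: const_mx 1 = diag_mx (\row_i v i) *m (1%:M + P *m Q).
  apply/matrixP=> i j; rewrite mulmxDr mulmx1 mul_diag_mx !mxE big_ord1 !mxE.
  by congr (_ + _); field; apply: hv.
rewrite det_mulmx det_diag det1D_mul det_mx11 !mxE eqxx mulr1n.
congr (_ * (1 + _)).
  by apply: eq_bigr => i _; rewrite mxE.
rewrite mulr_sumr; apply: eq_bigr => i _; rewrite !mxE mul1r mulrC.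
by [].
Qed.

Definition Vf (R : realType) (se2 c : R) (n : nat) : R := c + se2 / n%:R.
Definition Gf (R : realType) J (se2 c k : R) (g : 'I_J -> nat) : R :=
  (\prod_j Vf se2 c (g j)) * (1 + k * \sum_j (Vf se2 c (g j))^-1).

Lemma Vf_gt0 (R : realType) (se2 c : R) n : 0 < se2 -> 0 <= c -> (0 < n)%N -> 0 < Vf se2 c n.
Proof.
move=> hs hc hn; rewrite /Vf.
have : 0 < se2 / n%:R by rewrite divr_gt0 // ltr0n.
lra.
Qed.

Lemma Gf_gt0 (R : realType) J (se2 c k : R) (g : 'I_J -> nat) :
  0 < se2 -> 0 <= c -> 0 <= k -> (forall j, (0 < g j)%N) -> 0 < Gf se2 c k g.
Proof.
move=> hs hc hk hg; rewrite /Gf; apply: mulr_gt0.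
  by apply: prodr_gt0 => j _; apply: Vf_gt0.
have : 0 <= k * \sum_j (Vf se2 c (g j))^-1.
  apply: mulr_ge0 => //; apply: sumr_ge0 => j _.
  by rewrite invr_ge0 ltW // Vf_gt0.
lra.
Qed.

Lemma det_Mbeta (R : realType) (J : nat) (se2 sg2 rho : R) (A : 'M[R]_J) xi :
  0 < se2 -> 0 < sg2 -> 0 <= rho -> rho <= 1 -> (forall j, (0 < xi j)%N) ->
  \det (Mbeta se2 sg2 rho A xi) = \det A ^+ 2 / Gf se2 (sg2 * (1 - rho)) (sg2 * rho) xi.
Proof.
move=> hse hsg hr0 hr1 hxi.
rewrite /Mbeta /=.
set D := M0half R xi.
set W := diag_mx (\row_j Vf se2 (sg2 * (1 - rho)) (xi j)) + (sg2 * rho) *: const_mx 1.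
have hN : se2 *: 1%:M + D *m Sigma_gamma J sg2 rho *m D = D *m W *m D.
  apply/matrixP => i j.
  rewrite /D /M0half /W /Sigma_gamma !mul_mx_diag !mul_diag_mx !mxE.
  have [<-|ne] := eqVneq i j; rewrite ?eqxx ?(negbTE ne) /=.
    have hx : ((xi i)%:R : R) != 0 by rewrite pnatr_eq0 -lt0n.
    have hs : Num.sqrt ((xi i)%:R : R) * Num.sqrt ((xi i)%:R) = (xi i)%:R.
      by rewrite -expr2 sqr_sqrtr // ler0n.
    move: hx hs; rewrite /Vf; move: (Num.sqrt _) => s hx hs.
    rewrite -hs in hx *.
    have hs0 : s != 0 by apply: contraNneq hx => ->; rewrite mulr0.
    rewrite mulr1n; field.
    by [].
  rewrite !mulr0n. ring.
rewrite hN.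
have hv : forall j, Vf se2 (sg2 * (1 - rho)) (xi j) != 0.
  move=> j; rewrite gt_eqF // Vf_gt0 //; apply: mulr_ge0; lra.
have hW : \det W = Gf se2 (sg2 * (1 - rho)) (sg2 * rho) xi by rewrite /W det_diag_rank1.
have hD : \det D != 0.
  rewrite gt_eqF // /D /M0half det_diag; apply: prodr_gt0 => j _.
  by rewrite mxE sqrtr_gt0 ltr0n.
have hG : Gf se2 (sg2 * (1 - rho)) (sg2 * rho) xi != 0 
  by rewrite gt_eqF // Gf_gt0 //; apply: mulr_ge0; lra.
rewrite !det_mulmx det_tr det_inv !det_mulmx hW.
field.
by rewrite hG hD.
Qed.

Lemma core (R : realFieldType) (se2 c X Y : R) : 0 < se2 -> 0 <= c -> 1 <= X -> X + 1 <= Y ->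
  (c + se2 / Y) + (c + se2 / (X + 1)) <= (c + se2 / (Y + 1)) + (c + se2 / X) /\
  (c + se2 / Y) * (c + se2 / (X + 1)) <= (c + se2 / (Y + 1)) * (c + se2 / X).
Proof.
move=> hs hc hX hY.
have X0 : 0 < X by lra.
have X10 : 0 < X + 1 by lra.
have Y0 : 0 < Y by lra.
have Y10 : 0 < Y + 1 by lra.
have L1 : Y^-1 + (X + 1)^-1 <= (Y + 1)^-1 + X^-1.
  have e1 : Y^-1 - (Y + 1)^-1 = (Y * (Y + 1))^-1.
    by field; rewrite !gt_eqF.
  have e2 : X^-1 - (X + 1)^-1 = (X * (X + 1))^-1.
    by field; rewrite !gt_eqF.
  have : (Y * (Y + 1))^-1 <= (X * (X + 1))^-1.
    rewrite lef_pV2 ?posrE ?mulr_gt0 //; nra.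
  rewrite -e1 -e2; lra.
have L2 : Y^-1 * (X + 1)^-1 <= (Y + 1)^-1 * X^-1.
  rewrite -!invfM lef_pV2 ?posrE ?mulr_gt0 //; nra.
split.
  have : 0 <= se2 * ((Y + 1)^-1 + X^-1 - (Y^-1 + (X + 1)^-1)).
    by apply: mulr_ge0; lra.
  rewrite /= !mulrDr; lra.
have h3 : 0 <= c * se2 * ((Y + 1)^-1 + X^-1 - (Y^-1 + (X + 1)^-1)).
  by apply: mulr_ge0; [apply: mulr_ge0|]; lra.
have h4 : 0 <= se2 * se2 * ((Y + 1)^-1 * X^-1 - Y^-1 * (X + 1)^-1).
  by apply: mulr_ge0; [apply: mulr_ge0|]; lra.
move: h3 h4.
set p := Y^-1; set q := (X + 1)^-1; set r := (Y + 1)^-1; set s := X^-1.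
move=> h3 h4.
nra.
Qed.

Lemma big2D (T : Type) (idx : T) (op : Monoid.com_law idx) n (a b : 'I_n) (F : 'I_n -> T) :
  a != b -> \big[op/idx]_j F j = op (F a) (op (F b) (\big[op/idx]_(j | (j != a) && (j != b)) F j)).
Proof.
move=> ab; rewrite (bigD1 a) //= (bigD1 b) /=; last by rewrite eq_sym.
by [].
Qed.

Definition tr J (g : 'I_J -> nat) (a b : 'I_J) : 'I_J -> nat :=
  fun j => if j == a then (g a).-1 else if j == b then (g b).+1 else g j.

Lemma Gf_exchange (R : realType) J (se2 c k : R) (g : 'I_J -> nat) (a b : 'I_J) :
  0 < se2 -> 0 <= c -> 0 <= k -> (forall j, (0 < g j)%N) -> a != b -> ((g b).+2 <= g a)%N ->
  Gf se2 c k (tr g a b) <= Gf se2 c k g.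
Proof.
move=> hs hc hk hg ab hab.
have ba : b != a by rewrite eq_sym.
have er : forall j, (j != a) && (j != b) -> tr g a b j = g j.
  by move=> j /andP[/negbTE ha /negbTE hb]; rewrite /tr ha hb.
have tra : tr g a b a = (g a).-1 by rewrite /tr eqxx.
have trb : tr g a b b = (g b).+1 by rewrite /tr (negbTE ba) eqxx.
rewrite /Gf !(big2D _ _ ab) tra trb.
set P := \prod_(j | (j != a) && (j != b)) Vf se2 c (g j).
set S := \sum_(j | (j != a) && (j != b)) (Vf se2 c (g j))^-1.
have -> : \prod_(j | (j != a) && (j != b)) Vf se2 c (tr g a b j) = P.
  by apply: eq_bigr => j hj; rewrite er.
have -> : \sum_(j | (j != a) && (j != b)) (Vf se2 c (tr g a b j))^-1 = S.
  by apply: eq_bigr => j hj; rewrite er.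
have P0 : 0 <= P by apply: prodr_ge0 => j _; rewrite ltW // Vf_gt0.
have S0 : 0 <= S by apply: sumr_ge0 => j _; rewrite invr_ge0 ltW // Vf_gt0.
have iden : forall Va Vb : R, Va != 0 -> Vb != 0 ->
   Va * (Vb * P) * (1 + k * (Va^-1 + (Vb^-1 + S))) = P * (Va * Vb * (1 + k * S) + k * (Va + Vb)).
  by move=> Va Vb h1 h2; field; rewrite h1 h2.
have ga0 : (0 < (g a).-1)%N by move: hab; case: (g a) => [|[|n]].
rewrite !iden ?gt_eqF ?Vf_gt0 //.
apply: ler_wpM2l => //.
have [hsum hprod] : Vf se2 c (g a).-1 + Vf se2 c (g b).+1 <= Vf se2 c (g a) + Vf se2 c (g b) /\
   Vf se2 c (g a).-1 * Vf se2 c (g b).+1 <= Vf se2 c (g a) * Vf se2 c (g b).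
  have e1 : g a = ((g a).-1).+1 by rewrite prednK // ltnW // (leq_trans _ hab).
  rewrite /Vf {2 4}e1 -!natr1.
  apply: core => //; first by rewrite ler1n hg.
  rewrite natr1 ler_nat; move: hab; rewrite e1; by [].
apply: lerD; last by apply: ler_wpM2l.
by apply: ler_wpM2r => //; rewrite addr_ge0 // mulr_ge0.
Qed.

Lemma big_bal (T : Type) (idx : T) (op : Monoid.com_law idx) J (F : nat -> T) (g h : 'I_J -> nat) q :
  (forall j, g j = q \/ g j = q.+1) -> (forall j, h j = q \/ h j = q.+1) ->
  #|[set j | g j == q.+1]| = #|[set j | h j == q.+1]| ->
  \big[op/idx]_j F (g j) = \big[op/idx]_j F (h j).
Proof.
move=> hg hh hc.
have key : forall g : 'I_J -> nat, (forall j, g j = q \/ g j = q.+1) ->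
  \big[op/idx]_j F (g j) = op (iter #|[set j | g j == q.+1]| (op (F q.+1)) idx)
                              (iter (J - #|[set j | g j == q.+1]|) (op (F q)) idx).
  move=> f hf.
  rewrite (bigID (fun j => f j == q.+1)) /=.
  have -> : \big[op/idx]_(j | f j == q.+1) F (f j) = \big[op/idx]_(j in [set j | f j == q.+1]) F q.+1.
    by apply: eq_big => [j|j /eqP ->]; rewrite ?inE.
  have -> : \big[op/idx]_(j | f j != q.+1) F (f j) = \big[op/idx]_(j in [set j | f j != q.+1]) F q.
    apply: eq_big => [j|j hj]; rewrite ?inE //.
    by case: (hf j) hj => ->; rewrite ?eqxx.
  rewrite !big_const; congr (op _ (iter _ _ _)).
  rewrite -[X in (X - _)%N](card_ord J) -(cardsC [set j | f j == q.+1]) addKn.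
  have -> : ~: [set j | f j == q.+1] = [set j | f j != q.+1] by apply/setP => j; rewrite !inE.
  by [].
by rewrite (key g hg) (key h hh) hc.
Qed.

Lemma sum2D_nat n (a b : 'I_n) (F : 'I_n -> nat) :
  a != b -> (\sum_j F j = F a + (F b + \sum_(j | (j != a) && (j != b)) F j))%N.
Proof. exact: big2D. Qed.

Lemma sum_bool_card J (P : 'I_J -> bool) : (\sum_j (P j : nat))%N = #|[set j | P j]|.
Proof.
rewrite -sum1_card [RHS]big_mkcond /=; apply: eq_bigr => j _; rewrite inE.
by case: (P j).
Qed.

Lemma Gf_opt (R : realType) J (se2 c k : R) (I : nat) (xs : 'I_J -> nat) :
  (0 < J)%N -> 0 < se2 -> 0 <= c -> 0 <= k ->
  (forall j, xs j = (I %/ J)%N \/ xs j = (I %/ J).+1) ->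
  #|[set j | xs j == (I %/ J).+1]| = (I %% J)%N ->
  forall g : 'I_J -> nat, (\sum_j g j)%N = I -> (forall j, (0 < g j)%N) ->
  Gf se2 c k xs <= Gf se2 c k g.
Proof.
move=> hJ hs hc hk hxs hcnt g.
suff H : forall n (g : 'I_J -> nat), (\sum_j (g j) ^ 2 < n)%N -> (\sum_j g j)%N = I ->
  (forall j, (0 < g j)%N) -> Gf se2 c k xs <= Gf se2 c k g.
  by apply: H (ltnSn _).
elim=> [|n IH] {}g hn hsum hp; first by [].
case: (boolP [exists a, exists b, ((g b).+2 <= g a)%N]).
  case/existsP => a /existsP [b hab].
  have ab : a != b by apply: contraTneq hab => ->; rewrite -ltnNge ltnS leqnSn.
  apply: le_trans (Gf_exchange hs hc hk hp ab hab).
  have ba : b != a by rewrite eq_sym.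
  have ha2 : (2 <= g a)%N by apply: leq_trans hab.
  apply: IH.
  - move: hn; rewrite !(sum2D_nat _ ab) /tr eqxx (negbTE ba) eqxx.
    have -> : (\sum_(j | (j != a) && (j != b)) (if j == a then (g a).-1 else if j == b then (g b).+1 else g j) ^ 2
        = \sum_(j | (j != a) && (j != b)) g j ^ 2)%N.
      by apply: eq_bigr => j /andP[/negbTE -> /negbTE ->].
    move: hab ha2; set y := g a; set x := g b; set z := (\sum_(j | _) _)%N.
    move=> *; nia.
  - move: hsum; rewrite !(sum2D_nat _ ab) /tr eqxx (negbTE ba) eqxx.
    have -> : (\sum_(j | (j != a) && (j != b)) (if j == a then (g a).-1 else if j == b then (g b).+1 else g j)
        = \sum_(j | (j != a) && (j != b)) g j)%N.
      by apply: eq_bigr => j /andP[/negbTE -> /negbTE ->].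
    lia.
  - move=> j; rewrite /tr; case: (j == a); first by lia.
    by case: (j == b).
rewrite negb_exists => /forallP hnb.
have hle : forall a b, (g a <= (g b).+1)%N.
  move=> a b; move: (hnb a); rewrite negb_exists => /forallP /(_ b).
  by rewrite -ltnNge ltnS.
pose j0 := Ordinal hJ.
case: (@arg_minnP _ j0 xpredT g erefl) => b0 _ hmin.
set m := g b0 in hmin.
have hv : forall j, g j = m \/ g j = m.+1.
  move=> j; have := hmin j erefl; have := hle j b0; rewrite -/m; lia.
set t := #|[set j | g j == m.+1]|.
have ht : (t < J)%N.
  have : ([set j | g j == m.+1] \subset [set~ b0]).
    apply/fintype.subsetP => j; rewrite !inE; apply: contraTneq => ->.
    by rewrite -/m (ltn_eqF (ltnSn m)).
  move/subset_leq_card; rewrite cardsC1 card_ord -/t; lia.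
have hI : I = (m * J + t)%N.
  rewrite -hsum /t -sum_bool_card.
  have -> : (\sum_j g j = \sum_j (m + (g j == m.+1)))%N.
    apply: eq_bigr => j _; case: (hv j) => ->; first by rewrite (ltn_eqF (ltnSn m)) addn0.
    by rewrite eqxx addn1.
  by rewrite big_split /= big_const_ord iter_addn_0 mulnC.
have hq : (I %/ J)%N = m by rewrite hI divnMDl // divn_small // addn0.
have hr : (I %% J)%N = t by rewrite hI modnMDl modn_small.
have -> : Gf se2 c k g = Gf se2 c k xs.
  rewrite /Gf; congr (_ * (1 + k * _)).
    apply: (@big_bal _ _ _ J (fun n => Vf se2 c n) _ _ m) => //; first by rewrite -hq.
    by rewrite -[in RHS]hq hcnt hr.
  apply: (@big_bal _ _ _ J (fun n => (Vf se2 c n)^-1) _ _ m) => //; first by rewrite -hq.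
  by rewrite -[in RHS]hq hcnt hr.
by [].
Qed.

Unset Implicit Arguments. Set Strict Implicit.

Theorem lemma3 (R : realType) (J : nat) (se2 sg2 rho : R) (A : 'M[R]_J) (I : nat)
  (hJ : (0 < J)%N) (hse : 0 < se2) (hsg : 0 < sg2) (hrho0 : 0 <= rho) (hrho1 : rho <= 1)
  (hA : A \in unitmx) (hI : (0 < I)%N) :
  (forall xistar : 'I_J -> nat,
     (forall j, xistar j = (I %/ J)%N \/ xistar j = (I %/ J).+1) ->
     #|[set j | xistar j == (I %/ J).+1]| = (I %% J)%N ->
     D_optimal I se2 sg2 rho A xistar) /\
  ((I %% J)%N = 0%N -> D_optimal I se2 sg2 rho A (fun _ => (I %/ J)%N)).
Proof.
have part1 : forall xistar : 'I_J -> nat,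
     (forall j, xistar j = (I %/ J)%N \/ xistar j = (I %/ J).+1) ->
     #|[set j | xistar j == (I %/ J).+1]| = (I %% J)%N ->
     D_optimal I se2 sg2 rho A xistar.
  move=> xs hxs hcnt; split.
    rewrite /exact_design.
    have -> : (\sum_j xs j = \sum_j (I %/ J + (xs j == (I %/ J).+1)))%N.
      apply: eq_bigr => j _; case: (hxs j) => ->.
        by rewrite (ltn_eqF (ltnSn _)) addn0.
      by rewrite eqxx addn1.
    by rewrite big_split /= big_const_ord iter_addn_0 sum_bool_card hcnt -divn_eq.
  move=> xi hxi [hrk hpos].
  have hJI : (J <= I)%N.
    rewrite -hxi -[X in (X <= _)%N](card_ord J) -sum1_card.
    by apply: leq_sum => j _; exact: hpos j.
  have hq0 : (0 < I %/ J)%N by rewrite divn_gt0.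
  have hxsp : forall j, (0 < xs j)%N.
    by move=> j; case: (hxs j) => ->.
  rewrite !det_Mbeta //.
  have hA0 : \det A != 0 by rewrite -unitfE -unitmxE.
  have hk : 0 <= sg2 * rho by apply: mulr_ge0; lra.
  have hc : 0 <= sg2 * (1 - rho) by apply: mulr_ge0; lra.
  have G1 := Gf_gt0 hse hc hk hpos.
  have G2 := Gf_gt0 hse hc hk hxsp.
  have hopt := Gf_opt hJ hse hc hk hxs hcnt hxi hpos.
  have hA2 : 0 < \det A ^+ 2 by rewrite lt_def sqrf_eq0 hA0 sqr_ge0.
  rewrite ler_ln ?posrE ?divr_gt0 //.
  by rewrite ler_pM2l // lef_pV2 ?posrE.
split => //.
move=> h0; apply: part1 => [j|]; first by left.
rewrite h0 (ltn_eqF (ltnSn _)).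
by rewrite cards0.
Qed.
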